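(* Let $F$ be a formal group law over a commutative ring $R$ with formal inverse $\chi$, write $x-_Fy:=F(x,\chi(y))$, and let $S\subset R[[x_1,\dots,x_n]]$ be the ideal generated by the homogeneous symmetric polynomials of positive degree. Then (a) $\Delta_n:=\prod_{1\le i<j\le n}(x_i-x_j)\equiv n!\,x_1^{n-1}x_2^{n-2}\cdots x_{n-1} \pmod S$; (b) $\Delta_n\equiv \Delta_n^F:=\prod_{1\le i<j\le n}(x_i-_Fx_j)\pmod S$. *)

(* Defs.v *)
From HB Require Import structures.
From mathcomp Require Import all_boot all_order all_algebra all_fingroup.
Set Implicit Arguments. Unset Strict Implicit. Unset Printing Implicit Defensive.
Import GRing.Theory.
Local Open Scope ring_scope.

Definition mono (n : nat) := {ffun 'I_n -> nat}.
Definition mdeg n (m : mono n) : nat := (\sum_(i < n) m i)%N.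

Definition mps (R : Type) (n : nat) := mono n -> R.

Section MPS.
Variable R : comPzRingType.

Definition mzero n : mps R n := fun _ => 0.
Definition mmono n (e : mono n) : mps R n :=
  fun m => if m == e then 1 else 0.
Definition mone n : mps R n := mmono [ffun=> 0%N].
Definition mX n (i : 'I_n) : mps R n :=
  mmono [ffun j => if j == i then 1%N else 0%N].
Definition madd n (f g : mps R n) : mps R n := fun m => f m + g m.
Definition mopp n (f : mps R n) : mps R n := fun m => - f m.
Definition msub n (f g : mps R n) : mps R n := madd f (mopp g).
Definition mscale n (c : R) (f : mps R n) : mps R n := fun m => c * f m.
Definition mconst n (f : mps R n) : R := f [ffun=> 0%N].

Definition ffun_nat n k (a : {ffun 'I_n -> 'I_k}) : mono n :=
  [ffun i => nat_of_ord (a i)].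

Definition mmul n (f g : mps R n) : mps R n := fun m =>
  \sum_(a : {ffun 'I_n -> 'I_(mdeg m).+1} | [forall i, (a i <= m i)%N])
     f (ffun_nat a) * g [ffun i => (m i - a i)%N].

Definition mpow n (f : mps R n) (k : nat) : mps R n := iter k (mmul f) (@mone n).

(* substitution F(u_0,...,u_{k-1}) of series u_i (meant to have zero constant
   term) into F in k variables; for zero-constant-term u_i, only monomials of F
   with all exponents <= mdeg m contribute to the coefficient of x^m. *)
Definition msubst k n (F : mps R k) (u : 'I_k -> mps R n) : mps R n := fun m =>
  \sum_(a : {ffun 'I_k -> 'I_(mdeg m).+1})
     F (ffun_nat a) * (\big[@mmul n/@mone n]_(i < k) mpow (u i) (a i)) m.

Definition pair2 n (u v : mps R n) : 'I_2 -> mps R n :=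
  fun i => if val i == 0%N then u else v.

Definition is_fgl (F : mps R 2) : Prop :=
  [/\ msubst F (pair2 (mX (ord0 : 'I_1)) (@mzero 1)) = mX (ord0 : 'I_1),
      msubst F (pair2 (@mzero 1) (mX (ord0 : 'I_1))) = mX (ord0 : 'I_1),
      msubst F (pair2 (mX (inord 1 : 'I_2)) (mX (inord 0 : 'I_2))) = F &
      let x := mX (inord 0 : 'I_3) in
      let y := mX (inord 1 : 'I_3) in
      let z := mX (inord 2 : 'I_3) in
      msubst F (pair2 x (msubst F (pair2 y z)))
      = msubst F (pair2 (msubst F (pair2 x y)) z)].

Definition formal_inverse (F : mps R 2) (chi : mps R 1) : Prop :=
  mconst chi = 0 /\ msubst F (pair2 (mX (ord0 : 'I_1)) chi) = @mzero 1.

Definition fsub n (F : mps R 2) (chi : mps R 1) (u v : mps R n) : mps R n :=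
  msubst F (pair2 u (msubst chi (fun _ : 'I_1 => v))).

Definition homog_sym_pos n (s : mps R n) : Prop :=
  (exists2 d : nat, (0 < d)%N & forall m, s m != 0 -> mdeg m = d) /\
  (forall (sigma : 'S_n) (m : mono n), s [ffun i => m (sigma i)] = s m).

Definition in_S n (f : mps R n) : Prop :=
  exists (k : nat) (g s : 'I_k -> mps R n),
    (forall j, homog_sym_pos (s j)) /\
    f = \big[@madd n/@mzero n]_(j < k) mmul (g j) (s j).

Definition congr_S n (f g : mps R n) : Prop := in_S (msub f g).

Definition Delta n : mps R n :=
  \big[@mmul n/@mone n]_(i < n) \big[@mmul n/@mone n]_(j < n | (i < j)%N)
     msub (mX i) (mX j).

Definition DeltaF n (F : mps R 2) (chi : mps R 1) : mps R n :=
  \big[@mmul n/@mone n]_(i < n) \big[@mmul n/@mone n]_(j < n | (i < j)%N)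
     fsub F chi (mX i) (mX j).

(* n! x_1^(n-1) x_2^(n-2) ... x_(n-1)  (0-indexed: exponent of x_i is n-1-i) *)
Definition staircase n : mps R n :=
  mscale (n`!)%:R (mmono [ffun i : 'I_n => (n.-1 - i)%N]).

End MPS.

(* Main.v *)
Require Import Defs.
From HB Require Import structures.
From mathcomp Require Import all_boot all_order all_algebra all_fingroup.
From mathcomp Require Import boolp.
From mathcomp Require Import zify ring.
Set Implicit Arguments. Unset Strict Implicit. Unset Printing Implicit Defensive.
Import GRing.Theory.
Local Open Scope ring_scope.

Section Base.
Variables (R : comPzRingType) (n : nat).
Local Notation mono := (mono n).
Local Notation mps := (mps R n).

Definition box M := {ffun 'I_n -> 'I_M.+1}.
Definition fn M (a : box M) : mono := ffun_nat a.
Definition addm (u v : mono) : mono := [ffun i => (u i + v i)%N].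
Definition subm (u v : mono) : mono := [ffun i => (u i - v i)%N].
Definition lem (u v : mono) := [forall i, u i <= v i]%N.
Definition bnd M (u : mono) := [forall i, u i <= M]%N.
Definition tob M (u : mono) : box M := [ffun i => inord (u i)].

Lemma fnE M (a : box M) i : fn a i = a i.
Proof. by rewrite /fn /ffun_nat ffunE. Qed.

Lemma fn_bnd M (a : box M) : bnd M (fn a).
Proof. by apply/forallP => i; rewrite fnE -ltnS ltn_ord. Qed.

Lemma fn_tob M u : bnd M u -> fn (tob M u) = u.
Proof.
move/forallP=> h; apply/ffunP => i; rewrite fnE ffunE inordK //; exact: h.
Qed.

Lemma fn_inj M : injective (@fn M).
Proof.
move=> a b /ffunP h; apply/ffunP => i; apply/val_inj; move: (h i); by rewrite !fnE.
Qed.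

Lemma bnd_lem M u v : lem u v -> bnd M v -> bnd M u.
Proof.
move=> /forallP h1 /forallP h2; apply/forallP => i; exact: leq_trans (h1 i) (h2 i).
Qed.

Lemma bnd_le M1 M2 u : (M1 <= M2)%N -> bnd M1 u -> bnd M2 u.
Proof. move=> le /forallP h; apply/forallP => i; exact: leq_trans (h i) le. Qed.

Lemma bnd_mdeg u : bnd (mdeg u) u.
Proof.
apply/forallP => i; rewrite /mdeg (bigD1 i) //=; exact: leq_addr.
Qed.

Lemma sum_fn_eq M u (X : box M -> R) :
  \sum_(p : box M | fn p == u) X p = if bnd M u then X (tob M u) else 0.
Proof.
case: ifP => hb.
  rewrite (big_pred1 (tob M u)) // => p /=.
  apply/eqP/eqP => [hp|->]; last by rewrite fn_tob.
  by apply: fn_inj; rewrite fn_tob.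
rewrite big_pred0 // => p; apply/negbTE/eqP => hp; move: hb; by rewrite -hp fn_bnd.
Qed.

Lemma collapse M u (Y : mono -> R) : (~~ bnd M u -> Y u = 0) ->
  \sum_(p : box M) (if fn p == u then Y (fn p) else 0) = Y u.
Proof.
move=> hY; rewrite -big_mkcond /=.
rewrite (eq_bigr (fun _ => Y u)); last by move=> p /eqP ->.
by rewrite sum_fn_eq; case: ifP => // /negbT /hY ->.
Qed.

Lemma box_change_le M1 M2 (phi : mono -> R) m : (M1 <= M2)%N -> bnd M1 m ->
  \sum_(a : box M1 | lem (fn a) m) phi (fn a) = \sum_(a : box M2 | lem (fn a) m) phi (fn a).
Proof.
move=> le hm.
have le' : (M1.+1 <= M2.+1)%N by [].
pose h := fun a : box M1 => [ffun i => widen_ord le' (a i)] : box M2.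
pose h' := fun b : box M2 => tob M1 (fn b).
have fnh a : fn (h a) = fn a by apply/ffunP => i; rewrite !fnE ffunE.
rewrite (reindex_onto h h'); last first.
  move=> j hj; apply: fn_inj; rewrite fnh fn_tob //; exact: bnd_lem hj hm.
apply: eq_big => [a|a _]; last by rewrite fnh.
rewrite fnh /h'.
have -> : tob M1 (fn (h a)) == a by rewrite fnh; apply/eqP/fn_inj; rewrite fn_tob // fn_bnd.
by rewrite andbT.
Qed.

Lemma box_change M1 M2 (phi : mono -> R) m : bnd M1 m -> bnd M2 m ->
  \sum_(a : box M1 | lem (fn a) m) phi (fn a) = \sum_(a : box M2 | lem (fn a) m) phi (fn a).
Proof.
move=> h1 h2.
rewrite (@box_change_le M1 (maxn M1 M2) phi m (leq_maxl M1 M2) h1).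
by rewrite (@box_change_le M2 (maxn M1 M2) phi m (leq_maxr M1 M2) h2).
Qed.

Lemma mmul_box M (f g : mps) m : bnd M m ->
  mmul f g m = \sum_(a : box M | lem (fn a) m) f (fn a) * g (subm m (fn a)).
Proof.
move=> hm.
rewrite -(box_change (fun u => f u * g (subm m u)) (bnd_mdeg m) hm).
apply: eq_big => [a|a _].
  by apply: eq_forallb => i; rewrite fnE.
by congr (_ * g _); apply/ffunP => i; rewrite !ffunE.
Qed.


Definition conv M (f g : mps) m :=
  \sum_(a : box M) \sum_(b : box M | addm (fn a) (fn b) == m) f (fn a) * g (fn b).

Lemma conv_box M (f g : mps) m : bnd M m ->
  conv M f g m = \sum_(a : box M | lem (fn a) m) f (fn a) * g (subm m (fn a)).
Proof.
move=> hm; rewrite /conv (bigID (fun a => lem (fn a) m)) /= [X in _ + X]big1 ?addr0.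
  apply: eq_bigr => a ha.
  rewrite (eq_bigl (fun b => fn b == subm m (fn a))); last first.
    move=> b; apply/eqP/eqP => [h|->].
    - apply/ffunP=> i; move/ffunP: h => /(_ i); rewrite !ffunE => <-; lia.
    - apply/ffunP=> i; move/forallP: ha => /(_ i); rewrite !ffunE; exact: subnKC.
  rewrite sum_fn_eq; case: ifP => hb; first by rewrite fn_tob.
  suff: bnd M (subm m (fn a)) by rewrite hb.
  by apply: bnd_lem hm; apply/forallP => i; rewrite ffunE leq_subr.
move=> a ha; rewrite big_pred0 // => b; apply/negbTE; apply: contra ha => /eqP <-.
by apply/forallP => i; rewrite !ffunE leq_addr.
Qed.

Lemma mmul_conv M (f g : mps) m : bnd M m -> mmul f g m = conv M f g m.
Proof. by move=> hm; rewrite (mmul_box _ _ hm) conv_box. Qed.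

Lemma addmC u v : addm u v = addm v u.
Proof. by apply/ffunP => i; rewrite !ffunE addnC. Qed.

Lemma addmA u v w : addm u (addm v w) = addm (addm u v) w.
Proof. by apply/ffunP => i; rewrite !ffunE addnA. Qed.

Lemma conv_mkcond M (f g : mps) m : conv M f g m =
  \sum_(a : box M) \sum_(b : box M) if addm (fn a) (fn b) == m then f (fn a) * g (fn b) else 0.
Proof. by apply: eq_bigr => a _; rewrite big_mkcond. Qed.

Lemma mmulC (f g : mps) : mmul f g = mmul g f.
Proof.
apply: funext => m; rewrite !(mmul_conv _ _ (bnd_mdeg m)) !conv_mkcond exchange_big.
by apply: eq_bigr => b _; apply: eq_bigr => a _; rewrite addmC mulrC.
Qed.

Lemma ifif (b1 b2 : bool) (X : R) :
  (if b1 then (if b2 then X else 0) else 0) = (if b2 then (if b1 then X else 0) else 0).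
Proof. by case: b1; case: b2. Qed.

Lemma mmulA (f g h : mps) : mmul f (mmul g h) = mmul (mmul f g) h.
Proof.
apply: funext => m; set M := mdeg m.
have hm : bnd M m := bnd_mdeg m.
rewrite !(mmul_conv _ _ hm) !conv_mkcond.
transitivity (\sum_(a : box M) \sum_(b : box M) \sum_(c : box M)
   if addm (addm (fn a) (fn b)) (fn c) == m then f (fn a) * g (fn b) * h (fn c) else 0).
  apply: eq_bigr => a _.
  under eq_bigr => q _ do rewrite (mmul_conv _ _ (fn_bnd q)) conv_mkcond.
  transitivity (\sum_(q : box M) \sum_(b : box M) \sum_(c : box M)
     if fn q == addm (fn b) (fn c) then
       (if addm (fn a) (fn q) == m then f (fn a) * g (fn b) * h (fn c) else 0) else 0).
    apply: eq_bigr => q _; case: ifP => _; last first.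
      by rewrite big1 // => b _; rewrite big1 // => c _; case: ifP.
    rewrite mulr_sumr; apply: eq_bigr => b _; rewrite mulr_sumr; apply: eq_bigr => c _.
    by rewrite eq_sym; case: ifP => _; rewrite ?mulr0 ?mulrA.
  rewrite exchange_big; apply: eq_bigr => b _; rewrite exchange_big; apply: eq_bigr => c _.
  rewrite (@collapse M _ (fun u => if addm (fn a) u == m
     then f (fn a) * g (fn b) * h (fn c) else 0)); first by rewrite addmA.
  move=> nb; case: eqP => // he; case/negP: nb.
  by apply: bnd_lem hm; apply/forallP => i; rewrite -he !ffunE leq_addl.
symmetry.
transitivity (\sum_(p : box M) \sum_(c : box M) \sum_(a : box M) \sum_(b : box M)
     if fn p == addm (fn a) (fn b) then
       (if addm (fn p) (fn c) == m then f (fn a) * g (fn b) * h (fn c) else 0) else 0).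
  apply: eq_bigr => p _; apply: eq_bigr => c _.
  rewrite (mmul_conv _ _ (fn_bnd p)) conv_mkcond.
  case: ifP => _; last by rewrite big1 // => a _; rewrite big1 // => b _; case: ifP.
  rewrite mulr_suml; apply: eq_bigr => a _; rewrite mulr_suml; apply: eq_bigr => b _.
  by rewrite eq_sym; case: ifP => _; rewrite ?mul0r.
rewrite exchange_big /=.
under eq_bigr => c _ do rewrite exchange_big.
under eq_bigr => c _ do under eq_bigr => a _ do rewrite exchange_big.
rewrite exchange_big; apply: eq_bigr => a _; rewrite exchange_big.
apply: eq_bigr => b _; apply: eq_bigr => c _.
rewrite (@collapse M _ (fun u => if addm u (fn c) == m
     then f (fn a) * g (fn b) * h (fn c) else 0)) //.
move=> nb; case: eqP => // he; case/negP: nb.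
by apply: bnd_lem hm; apply/forallP => i; rewrite -he !ffunE leq_addr.
Qed.

Lemma mmono_mul u (g : mps) m :
  mmul (@mmono R n u) g m = if lem u m then g (subm m u) else 0.
Proof.
rewrite (mmul_box _ _ (bnd_mdeg m)) (bigID (fun a => fn a == u)) /=.
rewrite [X in _ + X]big1 ?addr0; last first.
  by move=> a /andP[_ /negbTE h]; rewrite /mmono h mul0r.
case: (boolP (lem u m)) => hu.
  rewrite (eq_bigl (fun a => fn a == u)); last first.
    by move=> a /=; case: (fn a =P u) => [->|]; rewrite ?hu ?andbF ?andbT.
  rewrite (eq_bigr (fun _ => g (subm m u))); last first.
    by move=> a /eqP ->; rewrite /mmono eqxx mul1r.
  by rewrite sum_fn_eq (bnd_lem hu (bnd_mdeg m)).
by rewrite big_pred0 // => a; case: (fn a =P u) => [->|]; rewrite ?(negbTE hu) ?andbF.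
Qed.

Lemma mmul1 (g : mps) : mmul (@mone R n) g = g.
Proof.
apply: funext => m; rewrite /mone mmono_mul.
have -> : lem [ffun=> 0%N] m by apply/forallP => i; rewrite ffunE.
by congr g; apply/ffunP => i; rewrite !ffunE subn0.
Qed.

Lemma mmulDl (f g h : mps) : mmul (madd f g) h = madd (mmul f h) (mmul g h).
Proof.
apply: funext => m; rewrite /mmul /madd -big_split; apply: eq_bigr => a _.
by rewrite mulrDl.
Qed.

Lemma maddA (f g h : mps) : madd f (madd g h) = madd (madd f g) h.
Proof. by apply: funext => m; rewrite /madd addrA. Qed.
Lemma maddC (f g : mps) : madd f g = madd g f.
Proof. by apply: funext => m; rewrite /madd addrC. Qed.
Lemma madd0 (f : mps) : madd (@mzero R n) f = f.
Proof. by apply: funext => m; rewrite /madd /mzero add0r. Qed.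
Lemma maddN (f : mps) : madd (mopp f) f = @mzero R n.
Proof. by apply: funext => m; rewrite /madd /mopp /mzero addNr. Qed.

End Base.

Definition ps (R : comPzRingType) (n : nat) := mps R n.
HB.instance Definition _ (R : comPzRingType) (n : nat) := gen_eqMixin (ps R n).
HB.instance Definition _ (R : comPzRingType) (n : nat) := gen_choiceMixin (ps R n).
HB.instance Definition _ (R : comPzRingType) (n : nat) :=
  GRing.isZmodule.Build (ps R n) (@maddA R n) (@maddC R n) (@madd0 R n) (@maddN R n).
HB.instance Definition _ (R : comPzRingType) (n : nat) :=
  GRing.Zmodule_isComPzRing.Build (ps R n) (@mmulA R n) (@mmulC R n) (@mmul1 R n) (@mmulDl R n).

Section Ideal.
Variables (R : comPzRingType) (n : nat).
Local Notation P := (ps R n).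
Local Notation inS := (@in_S R n).

Lemma in_SE (f : P) : inS f <->
  exists k (g s : 'I_k -> P), (forall j, homog_sym_pos (s j)) /\ f = \sum_(j < k) g j * s j.
Proof. by []. Qed.

Lemma inS0 : inS (0 : P).
Proof. by apply/in_SE; exists 0%N, (fun _ => 0), (fun _ => 0); split => [[]//|]; rewrite big_ord0. Qed.

Lemma inSD (f g : P) : inS f -> inS g -> inS (f + g).
Proof.
move=> /in_SE [k1 [g1 [s1 [h1 e1]]]] /in_SE [k2 [g2 [s2 [h2 e2]]]].
apply/in_SE.
pose g' := fun j : 'I_(k1 + k2) => match split j with inl a => g1 a | inr b => g2 b end.
pose s' := fun j : 'I_(k1 + k2) => match split j with inl a => s1 a | inr b => s2 b end.
have E1 i : split (lshift k2 i) = inl i := unsplitK (inl _ i).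
have E2 i : split (rshift k1 i) = inr i := unsplitK (inr _ i).
exists (k1 + k2)%N, g', s'; split.
  by move=> j; rewrite /s'; case: (split j).
rewrite big_split_ord e1 e2 /g' /s'; congr (_ + _); apply: eq_bigr => i _.
  by rewrite E1.
by rewrite E2.
Qed.

Lemma inSM (h f : P) : inS f -> inS (h * f).
Proof.
move=> /in_SE [k [g [s [hs e]]]]; apply/in_SE; exists k, (fun j => h * g j), s; split => //.
by rewrite e mulr_sumr; apply: eq_bigr => j _; rewrite mulrA.
Qed.

Lemma inSMr (h f : P) : inS f -> inS (f * h).
Proof. by rewrite mulrC; apply: inSM. Qed.

Lemma inSN (f : P) : inS f -> inS (- f).
Proof. by move=> h; rewrite -mulN1r; apply: inSM. Qed.

Lemma inSB (f g : P) : inS f -> inS g -> inS (f - g).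
Proof. by move=> hf hg; apply: inSD => //; apply: inSN. Qed.

Lemma inS_sum (I : Type) (r : seq I) (Q : pred I) (F : I -> P) :
  (forall i, Q i -> inS (F i)) -> inS (\sum_(i <- r | Q i) F i).
Proof.
move=> h; elim/big_rec: _ => [|i x qi hx]; first exact: inS0.
by apply: inSD => //; apply: h.
Qed.

Lemma inS_gen (s : P) : homog_sym_pos s -> inS s.
Proof.
move=> h; apply/in_SE; exists 1%N, (fun _ => 1), (fun _ => s); split => //.
by rewrite big_ord1 mul1r.
Qed.

Definition cg (f g : P) := inS (f - g).

Lemma cg_refl f : cg f f.
Proof. by rewrite /cg subrr; apply: inS0. Qed.
Lemma cg_sym f g : cg f g -> cg g f.
Proof. by rewrite /cg => h; rewrite -opprB; apply: inSN. Qed.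
Lemma cg_trans f g h : cg f g -> cg g h -> cg f h.
Proof.
by rewrite /cg => h1 h2; have := inSD h1 h2; rewrite addrA subrK.
Qed.
Lemma cgD f f' g g' : cg f f' -> cg g g' -> cg (f + g) (f' + g').
Proof.
rewrite /cg => h1 h2; have := inSD h1 h2.
by have -> : (f + g) - (f' + g') = (f - f') + (g - g') by ring.
Qed.
Lemma cgM f f' g g' : cg f f' -> cg g g' -> cg (f * g) (f' * g').
Proof.
rewrite /cg => h1 h2.
have -> : f * g - f' * g' = (f - f') * g + f' * (g - g') by ring.
by apply: inSD; [apply: inSMr | apply: inSM].
Qed.
Lemma cg_sum (I : Type) (r : seq I) (Q : pred I) (F G : I -> P) :
  (forall i, Q i -> cg (F i) (G i)) -> cg (\sum_(i <- r | Q i) F i) (\sum_(i <- r | Q i) G i).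
Proof.
move=> h; rewrite /cg -sumrB; apply: inS_sum => i qi; exact: h.
Qed.
Lemma cg_inS (f g : P) : inS (f - g) -> cg f g.
Proof. by []. Qed.
Lemma cg_addS (f g : P) : inS g -> cg (f + g) f.
Proof. by rewrite /cg addrC addKr. Qed.

End Ideal.

Section Mono.
Variables (R : comPzRingType) (n : nat).
Local Notation P := (ps R n).
Local Notation mono := (mono n).

Definition unitm (i : 'I_n) : mono := [ffun j => if j == i then 1 else 0]%N.
Definition powm (i : 'I_n) a : mono := [ffun j => if j == i then a else 0]%N.
Definition zm : mono := [ffun=> 0%N].
Definition mo (u : mono) : P := @mmono R n u.
Definition xx (i : 'I_n) : P := @mX R n i.

Lemma xxE i : xx i = mo (unitm i). Proof. by []. Qed.
Lemma mo0 : mo zm = 1. Proof. by []. Qed.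

Lemma coefM (f g : P) m : (f * g) m = mmul f g m. Proof. by []. Qed.
Lemma coefD (f g : P) m : (f + g) m = f m + g m. Proof. by []. Qed.
Lemma coefN (f : P) m : (- f) m = - f m. Proof. by []. Qed.
Lemma coefB (f g : P) m : (f - g) m = f m - g m. Proof. by []. Qed.
Lemma coef0 m : (0 : P) m = 0. Proof. by []. Qed.

Lemma coef_sum (I : Type) (r : seq I) (Q : pred I) (F : I -> P) m :
  (\sum_(i <- r | Q i) F i) m = \sum_(i <- r | Q i) F i m.
Proof. by elim/big_rec2: _ => // i y1 y2 _ <-. Qed.

Lemma coef_mo u m : mo u m = if m == u then 1 else 0. Proof. by []. Qed.

Lemma coef_moM u (g : P) m : (mo u * g) m = if lem u m then g (subm m u) else 0.
Proof. exact: mmono_mul. Qed.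

Lemma addm_subm (u m : mono) : lem u m -> addm u (subm m u) = m.
Proof.
move/forallP=> h; apply/ffunP => i; rewrite !ffunE; exact: subnKC (h i).
Qed.

Lemma lem_addm (u v : mono) : lem u (addm u v).
Proof. by apply/forallP => i; rewrite ffunE leq_addr. Qed.

Lemma subm_addm (u v : mono) : subm (addm u v) u = v.
Proof. by apply/ffunP => i; rewrite !ffunE addKn. Qed.

Lemma moM u v : mo u * mo v = mo (addm u v).
Proof.
apply: funext => m; rewrite coef_moM !coef_mo.
case: ifP => hu.
  have -> : (subm m u == v) = (m == addm u v).
    apply/eqP/eqP => [<-|->]; first by rewrite addm_subm.
    exact: subm_addm.
  by [].
by case: eqP => // he; move: hu; rewrite he lem_addm.
Qed.

Lemma mdeg_addm (u v : mono) : mdeg (addm u v) = (mdeg u + mdeg v)%N.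
Proof. by rewrite /mdeg -big_split; apply: eq_bigr => i _; rewrite ffunE. Qed.

Lemma mdeg_subm (u m : mono) : lem u m -> mdeg (subm m u) = (mdeg m - mdeg u)%N.
Proof. by move=> h; rewrite -{2}(addm_subm h) mdeg_addm addKn. Qed.

Lemma mdeg_powm i a : mdeg (powm i a) = a.
Proof.
rewrite /mdeg (bigD1 i) //= big1 => [|j /negbTE h]; rewrite ffunE ?eqxx ?h ?addn0 //.
Qed.

Lemma mdeg_unitm i : mdeg (unitm i) = 1%N.
Proof. by have := mdeg_powm i 1; congr (mdeg _ = _); apply/ffunP => j; rewrite !ffunE. Qed.

Lemma xx_exp i a : xx i ^+ a = mo (powm i a).
Proof.
elim: a => [|a IH].
  by rewrite expr0 -mo0; congr mo; apply/ffunP => j; rewrite !ffunE; case: ifP.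
rewrite exprS IH xxE moM; congr mo; apply/ffunP => j; rewrite !ffunE.
by case: ifP.
Qed.

Definition ordge k (f : P) := forall m, (mdeg m < k)%N -> f m = 0.

Lemma ordge0 k : ordge k 0. Proof. by []. Qed.
Lemma ordge_le k k' f : (k' <= k)%N -> ordge k f -> ordge k' f.
Proof. by move=> le h m hm; apply: h; exact: leq_trans hm le. Qed.
Lemma ordgeD k f g : ordge k f -> ordge k g -> ordge k (f + g).
Proof. by move=> hf hg m hm; rewrite coefD hf ?hg ?addr0. Qed.
Lemma ordgeN k f : ordge k f -> ordge k (- f).
Proof. by move=> hf m hm; rewrite coefN hf ?oppr0. Qed.
Lemma ordgeB k f g : ordge k f -> ordge k g -> ordge k (f - g).
Proof. by move=> hf hg; apply: ordgeD => //; apply: ordgeN. Qed.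
Lemma ordge_mo u : ordge (mdeg u) (mo u).
Proof. by move=> m hm; rewrite coef_mo; case: eqP => // e; move: hm; rewrite e ltnn. Qed.

Lemma ordgeM a b f g : ordge a f -> ordge b g -> ordge (a + b) (f * g).
Proof.
move=> hf hg m hm; rewrite coefM (mmul_box _ _ (bnd_mdeg m)) big1 // => c.
move: (fn c) => u hc.
case: (ltnP (mdeg u) a) => h; first by rewrite hf ?mul0r.
rewrite hg ?mulr0 // mdeg_subm //.
have : (mdeg u <= mdeg m)%N by rewrite -(addm_subm hc) mdeg_addm leq_addr.
lia.
Qed.

Lemma ordge_sum (I : Type) (r : seq I) (Q : pred I) (F : I -> P) k :
  (forall i, Q i -> ordge k (F i)) -> ordge k (\sum_(i <- r | Q i) F i).
Proof.
by move=> h; elim/big_rec: _ => // i x qi hx; apply: ordgeD => //; apply: h.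
Qed.

Lemma ordge_prod (I : Type) (r : seq I) (Q : pred I) (A B : I -> P) (c : I -> nat) :
  (forall i, Q i -> ordge (c i) (B i) /\ ordge (c i).+1 (A i - B i)) ->
  ordge (\sum_(i <- r | Q i) c i) (\prod_(i <- r | Q i) B i) /\
  ordge (\sum_(i <- r | Q i) c i).+1 (\prod_(i <- r | Q i) A i - \prod_(i <- r | Q i) B i).
Proof.
move=> h; elim: r => [|x r [IH1 IH2]].
  rewrite !big_nil subrr; split => // m; rewrite ltn0 //.
rewrite !big_cons; case: ifP => qx //.
have [h1 h2] := h x qx.
split; first exact: ordgeM.
have -> : A x * \prod_(j <- r | Q j) A j - B x * \prod_(j <- r | Q j) B j =
  (A x - B x) * (\prod_(j <- r | Q j) B j + (\prod_(j <- r | Q j) A j - \prod_(j <- r | Q j) B j))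
  + B x * (\prod_(j <- r | Q j) A j - \prod_(j <- r | Q j) B j) by ring.
apply: ordgeD.
  rewrite -addSn; apply: ordgeM => //; apply: ordgeD => //.
  exact: ordge_le IH2.
by rewrite -addnS; apply: ordgeM.
Qed.

Lemma lem_unitm i (m : mono) : lem (unitm i) m = (0 < m i)%N.
Proof.
apply/forallP/idP => [/(_ i)|h j]; first by rewrite ffunE eqxx.
by rewrite ffunE; case: eqP => // ->.
Qed.

Lemma addm_subm_unit i (m : mono) : (0 < m i)%N -> addm (subm m (unitm i)) (unitm i) = m.
Proof. by rewrite -lem_unitm => h; rewrite addmC addm_subm. Qed.

Lemma ordge_decomp k (f : P) : ordge k.+1 f ->
  exists g : 'I_n -> P, (forall i, ordge k (g i)) /\ f = \sum_i xx i * g i.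
Proof.
move=> hf.
pose g := fun i : 'I_n => (fun q : mono =>
  if [pick j | (0 < addm q (unitm i) j)%N] == Some i then f (addm q (unitm i)) else 0) : P.
exists g; split.
  move=> i q hq; rewrite /g hf ?if_same //.
  by rewrite mdeg_addm mdeg_unitm addn1.
apply: funext => p; rewrite coef_sum; symmetry.
transitivity (\sum_i (if [pick j | 0 < p j]%N == Some i then f p else 0)).
  apply: eq_bigr => i _; rewrite xxE coef_moM lem_unitm /g.
  case: (boolP (0 < p i)%N) => hi; first by rewrite addm_subm_unit.
  case: pickP => // j hj; case: eqP => // [[e]]; move: hj hi; by rewrite e => ->.
case: pickP => [j hj|h0].
  rewrite (bigD1 j) //= eqxx big1 ?addr0 // => i /negbTE h.
  by case: eqP => // [[e]]; move: h; rewrite e eqxx.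
rewrite big1 => [|i _]; last by case: (None =P Some i).
rewrite hf //.
have -> : p = zm by apply/ffunP => i; have := h0 i; rewrite ffunE /=; case: (p i).
by rewrite /mdeg big1 // => i _; rewrite ffunE.
Qed.

End Mono.

Section Sym.
Variables (R : comPzRingType) (n : nat).
Local Notation P := (ps R n).
Local Notation mono := (mono n).
Local Notation inS := (@in_S R n).
Local Notation cg := (@cg R n).
Local Notation xx := (@xx R n).
Local Notation mo := (@mo R n).

Definition xn (k : nat) : P := if insub k is Some i then xx i else 0.

Lemma xnE (i : 'I_n) : xn i = xx i.
Proof. by rewrite /xn valK. Qed.

Fixpoint H (i : nat) : nat -> P :=
  match i with
  | 0 => fun k => if k == 0%N then 1 else 0
  | i'.+1 => fix Hk k := match k with 0 => 1 | k'.+1 => H i' k + xn i' * Hk k' end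
  end.

Fixpoint E (j : nat) : nat -> P :=
  match j with
  | 0 => fun k => if k == 0%N then 1 else 0
  | j'.+1 => fun k => match k with 0 => 1 | k'.+1 => E j' k + xn (n - j'.+1) * E j' k' end
  end.

Lemma H0 i : H i 0 = 1. Proof. by case: i. Qed.
Lemma HS i k : H i.+1 k.+1 = H i k.+1 + xn i * H i.+1 k. Proof. by []. Qed.
Lemma E0 j : E j 0 = 1. Proof. by case: j. Qed.
Lemma ES j k : E j.+1 k.+1 = E j k.+1 + xn (n - j.+1) * E j k. Proof. by []. Qed.
Lemma E_big j k : (j < k)%N -> E j k = 0.
Proof.
elim: j k => [|j IH] [|k] //= h.
by rewrite !IH ?mulr0 ?addr0 // ltnW.
Qed.

Lemma H_sum i a : H i.+1 a = \sum_(b < a.+1) xn i ^+ b * H i (a - b).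
Proof.
elim: a => [|a IH]; first by rewrite big_ord1 expr0 mul1r /= H0.
rewrite HS IH [RHS]big_ord_recl expr0 mul1r subn0 mulr_sumr; congr (_ + _).
by apply: eq_bigr => b _; rewrite /= exprS mulrA subSS.
Qed.

Definition Hall d := H n d.

Lemma H_id j k : (j <= n)%N ->
  H (n - j) k = \sum_(l < k.+1) (-1) ^+ l * E j l * Hall (k - l).
Proof.
elim: j k => [|j IH] k hj.
  rewrite subn0 big_ord_recl big1 => [|l _]; last by rewrite /= mulr0 mul0r.
  by rewrite /= expr0 !mul1r subn0 addr0.
set i := (n - j.+1)%N.
have ei : (n - j = i.+1)%N by rewrite /i; lia.
elim: k => [|k IHk].
  by rewrite big_ord1 H0 E0 expr0 !mul1r subn0 /Hall H0.
have hrec : H i k.+1 = H i.+1 k.+1 - xn i * H i.+1 k by rewrite HS addrK.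
rewrite hrec -ei !IH ?(ltnW hj) //.
rewrite [in RHS]big_ord_recl [in LHS]big_ord_recl /= !expr0 !mul1r !E0 !subn0.
rewrite -addrA mul1r; congr (_ + _).
rewrite mulr_sumr -sumrN -big_split /=; apply: eq_bigr => l _.
rewrite /bump /= add1n add0n subSS -/i exprS; ring.
Qed.


Definition supp i (u : mono) := [forall j : 'I_n, (i <= j)%N ==> (u j == 0%N)].

Lemma mdeg_eq0 (m : mono) : (mdeg m == 0%N) = (m == zm n).
Proof.
apply/idP/eqP => [|->]; last by rewrite /mdeg big1 // => i _; rewrite ffunE.
rewrite /mdeg sum_nat_eq0 => /forallP h; apply/ffunP => i; rewrite ffunE.
by apply/eqP; move: (h i); rewrite implyTb.
Qed.

Lemma supp0 (m : mono) : supp 0 m = (m == zm n).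
Proof.
apply/forallP/eqP => [h|-> j]; last by rewrite ffunE eqxx implybT.
by apply/ffunP => j; rewrite ffunE; apply/eqP; move: (h j).
Qed.

Lemma supp_zm i : supp i (zm n). Proof. by apply/forallP => j; rewrite ffunE eqxx implybT. Qed.

Lemma supp_n (m : mono) : supp n m.
Proof. by apply/forallP => j; rewrite leqNgt ltn_ord. Qed.

Lemma suppS i (o : 'I_n) (m : mono) : nat_of_ord o = i ->
  supp i m = supp i.+1 m && (m o == 0%N).
Proof.
move=> eo; apply/forallP/andP => [h|[/forallP h1 h2] j].
  split; last by move: (h o); rewrite eo leqnn.
  by apply/forallP => j; apply/implyP => hj; move: (h j); rewrite ltnW.
apply/implyP => hj; case: (ltngtP i j) => hij.
- by move: (h1 j); rewrite hij.
- by move: hj; rewrite leqNgt hij.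
- by have -> : j = o by apply: val_inj; rewrite /= eo.
Qed.

Lemma supp_subunit i (o : 'I_n) (m : mono) : (o < i)%N ->
  supp i (subm m (unitm o)) = supp i m.
Proof.
move=> hoi; apply: eq_forallb => j; rewrite !ffunE.
case: (j =P o) => [->|_]; last by rewrite subn0.
by rewrite leqNgt hoi.
Qed.

Lemma mdeg_ge (m : mono) j : (m j <= mdeg m)%N.
Proof. by rewrite /mdeg (bigD1 j) //= leq_addr. Qed.

Lemma H_coef i k m : (i <= n)%N ->
  H i k m = if (mdeg m == k) && supp i m then 1 else 0.
Proof.
elim: i k m => [|i IH] k m hi.
  rewrite supp0 /=; case: eqP => [->|hk].
    by rewrite -(mo0 R n) coef_mo -mdeg_eq0 andb_idl // => /eqP ->.
  rewrite coef0; case: ifP => // /andP [/eqP e /eqP em]; case: hk.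
  by rewrite -e em; apply/eqP; rewrite mdeg_eq0.
pose o : 'I_n := Ordinal hi.
have xo : xn i = xx o by rewrite -xnE.
elim: k m => [|k IHk] m.
  rewrite H0 -(mo0 R n) coef_mo mdeg_eq0; case: eqP => // ->.
  by rewrite supp_zm.
rewrite HS coefD xo xxE coef_moM lem_unitm IH ?(ltnW hi) // (suppS m (erefl : nat_of_ord o = i)).
case: (posnP (m o)) => hmo.
  by rewrite andbT addr0.
rewrite !andbF add0r IHk supp_subunit ?ltnSn // mdeg_subm ?lem_unitm // mdeg_unitm.
have := mdeg_ge m o => hle.
have -> : (mdeg m - 1 == k)%N = (mdeg m == k.+1) by apply/eqP/eqP; lia.
by [].
Qed.

Lemma mdeg_perm (s : 'S_n) (m : mono) : mdeg [ffun i => m (s i)] = mdeg m.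
Proof.
rewrite /mdeg (reindex_inj (@perm_inj _ s^-1)) /=.
by apply: eq_bigr => i _; rewrite ffunE permKV.
Qed.

Lemma Hall_hsp d : (0 < d)%N -> homog_sym_pos (Hall d : P).
Proof.
move=> hd; split.
  exists d => // m; rewrite /Hall H_coef //.
  by case: ifP => [/andP[/eqP -> _]|_] //; rewrite eqxx.
by move=> s m; rewrite /Hall !H_coef // mdeg_perm !supp_n.
Qed.

Lemma inS_Hall d : (0 < d)%N -> inS (Hall d).
Proof. by move=> hd; apply: inS_gen; apply: Hall_hsp. Qed.

End Sym.

Section Main.
Variables (R : comPzRingType) (n : nat).
Local Notation P := (ps R n).
Local Notation mono := (mono n).
Local Notation inS := (@in_S R n).
Local Notation cg := (@cg R n).
Local Notation xx := (@xx R n).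
Local Notation mo := (@mo R n).
Local Notation H := (@H R n).
Local Notation E := (@E R n).
Local Notation Hall := (@Hall R n).
Local Notation xn := (@xn R n).
Local Notation supp := (@supp n).

Lemma mdeg_zm : mdeg (zm n) = 0%N.
Proof. by apply/eqP; rewrite mdeg_eq0. Qed.

Lemma cg_HE i k : (i <= n)%N -> cg (H i k) ((-1) ^+ k * E (n - i) k).
Proof.
move=> hi; have := H_id R k (leq_subr i n); rewrite subKn // => ->.
rewrite /cg big_ord_recr /= subnn /Hall H0 mulr1 addrK.
apply: inS_sum => l _; apply: inSM; apply: inS_Hall; rewrite subn_gt0; exact: ltn_ord.
Qed.

Lemma Rel i k : (i <= n)%N -> (n - i < k)%N -> inS (H i k).
Proof.
move=> hi hk; have := cg_HE k hi; rewrite E_big // mulr0 /cg subr0; exact.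
Qed.

Inductive span (Pr : mono -> Prop) : P -> Prop :=
| span0 : span Pr 0
| spanm u : Pr u -> span Pr (mo u)
| spanD f g : span Pr f -> span Pr g -> span Pr (f + g).

Lemma span_inS Pr (g f : P) : span Pr f -> (forall u, Pr u -> inS (g * mo u)) -> inS (g * f).
Proof.
move=> sp h; elim: sp => [|u pu|f1 f2 _ h1 _ h2].
- rewrite mulr0; exact: inS0.
- exact: h.
- by rewrite mulrDr; apply: inSD.
Qed.

Lemma span_weak (Pr Pr' : mono -> Prop) f : (forall u, Pr u -> Pr' u) -> span Pr f -> span Pr' f.
Proof.
move=> h; elim=> [|u pu|f1 f2 _ h1 _ h2]; [exact: span0|exact/spanm/h|exact: spanD].
Qed.

Lemma span_moM (Pr Pr' : mono -> Prop) v f : (forall u, Pr u -> Pr' (addm v u)) ->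
  span Pr f -> span Pr' (mo v * f).
Proof.
move=> h; elim=> [|u pu|f1 f2 _ h1 _ h2].
- rewrite mulr0; exact: span0.
- rewrite moM; exact/spanm/h.
- rewrite mulrDr; exact: spanD.
Qed.

Lemma supp_weak i (u : mono) : supp i u -> supp i.+1 u.
Proof.
move/forallP=> h; apply/forallP => j; apply/implyP => hj.
by move: (h j); rewrite ltnW.
Qed.

Lemma span_H i d : (i <= n)%N -> span (fun u => supp i u /\ mdeg u = d) (H i d).
Proof.
elim: i d => [|i IH] d hi.
  rewrite /=; case: eqP => [->|_]; last exact: span0.
  rewrite -(mo0 R n); apply: spanm; split; [exact: supp_zm | exact: mdeg_zm].
pose o : 'I_n := Ordinal hi.
have xo : xn i = xx o by rewrite -xnE.
elim: d => [|d IHd].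
  rewrite H0 -(mo0 R n); apply: spanm; split; [exact: supp_zm | exact: mdeg_zm].
rewrite HS; apply: spanD.
  apply: span_weak (IH _ (ltnW hi)) => u [h1 h2]; split => //; exact: supp_weak.
rewrite xo xxE; apply: span_moM IHd => u [h1 h2]; split.
  apply/forallP => j; apply/implyP => hj; rewrite ffunE.
  move/forallP: h1 => /(_ j); rewrite hj /= => /eqP ->.
  rewrite ffunE; case: (j =P o) => // e; move: hj; by rewrite e ltnn.
by rewrite mdeg_addm mdeg_unitm h2.
Qed.

Definition D i := (\sum_(j < i) (n - j.+1))%N.

Lemma C_lem i : (i <= n)%N -> forall mu, supp i mu -> (D i < mdeg mu)%N -> inS (mo mu).
Proof.
elim: i => [_ mu|i IH hi mu hs hd].
  by rewrite supp0 => /eqP ->; rewrite mdeg_zm /D big_ord0.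
pose o : 'I_n := Ordinal hi.
have xo : xn i = xx o by rewrite -xnE.
have DS : D i.+1 = (D i + (n - i.+1))%N by rewrite /D big_ord_recr.
have key : forall a nu, supp i nu -> (D i.+1 < mdeg nu + a)%N -> inS (xx o ^+ a * mo nu).
  elim/ltn_ind => a IHa nu hnu hlt.
  case: (ltnP (D i) (mdeg nu)) => hD.
    by apply: inSM; apply: IH => //; exact: ltnW.
  have ha : (n - i.+1 < a)%N by lia.
  have hrel : inS (H i.+1 a) by apply: Rel.
  have e : xx o ^+ a = H i.+1 a - \sum_(b < a) xx o ^+ b * H i (a - b).
    by rewrite H_sum big_ord_recr /= subnn H0 mulr1 xo; ring.
  rewrite e mulrBl mulr_suml; apply: inSB; first exact: inSMr.
  apply: inS_sum => b _; rewrite -mulrA [H _ _ * _]mulrC mulrA.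
  apply: (span_inS (span_H (a - b) (ltnW hi))) => u [hu du].
  rewrite -mulrA moM; apply: IHa => //.
    apply/forallP => j; apply/implyP => hj; rewrite ffunE.
    move/forallP: hu => /(_ j); rewrite hj => /eqP ->.
    by move/forallP: hnu => /(_ j); rewrite hj => /eqP ->.
  rewrite mdeg_addm du; have := ltn_ord b; lia.
pose nu : mono := [ffun j => if j == o then 0%N else mu j].
have emu : mu = addm (powm o (mu o)) nu.
  by apply/ffunP => j; rewrite !ffunE; case: (j =P o) => [->|]; rewrite ?addn0.
rewrite emu -moM -xx_exp; apply: key.
  apply/forallP => j; apply/implyP => hj; rewrite ffunE.
  case: (j =P o) => // ne; move/forallP: hs => /(_ j) /implyP; apply.
  rewrite ltn_neqAle hj andbT; apply/eqP => e; apply: ne; apply: val_inj; by rewrite /= e.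
by move: hd; rewrite {1}emu mdeg_addm mdeg_powm addnC.
Qed.


Definition stair i : mono := [ffun j : 'I_n => if (j < i)%N then (n - j.+1)%N else 0%N].

Lemma supp_stair i : supp i (stair i).
Proof. by apply/forallP => j; apply/implyP => hj; rewrite ffunE ltnNge hj. Qed.

Lemma mdeg_stair i : (i <= n)%N -> mdeg (stair i) = D i.
Proof.
move=> hi; rewrite /D (big_ord_widen _ (fun j => n - j.+1)%N hi) big_mkcond /=.
by apply: eq_bigr => j _; rewrite ffunE.
Qed.

Lemma stairS i (o : 'I_n) : nat_of_ord o = i -> stair i.+1 = addm (stair i) (powm o (n - i.+1)).
Proof.
move=> eo; apply/ffunP => j; rewrite !ffunE.
case: (j =P o) => [->|ne]; first by rewrite eo ltnn ltnSn.
have hne : nat_of_ord j != i by apply/eqP => e; apply: ne; apply: val_inj; rewrite /= e eo.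
by rewrite addn0 ltnS leq_eqVlt (negbTE hne).
Qed.

Lemma stair0 : stair 0 = zm n.
Proof. by apply/ffunP => j; rewrite !ffunE. Qed.

Lemma stairn : stair n = [ffun j : 'I_n => (n.-1 - j)%N].
Proof. by apply/ffunP => j; rewrite !ffunE ltn_ord; lia. Qed.

Lemma bump0 k : bump 0 k = k.+1. Proof. by []. Qed.

Lemma PE_step (j : nat) (t x : P) (e e' : nat -> P) :
  e' 0%N = 1 -> (forall k, e' k.+1 = e k.+1 + x * e k) -> e 0%N = 1 -> e j.+1 = 0 ->
  (t - x) * \sum_(k < j.+1) (-1) ^+ k * e k * t ^+ (j - k)
  = \sum_(k < j.+2) (-1) ^+ k * e' k * t ^+ (j.+1 - k).
Proof.
move=> h0 hS e0 ej.
rewrite [RHS]big_ord_recl /= h0 expr0 !mul1r subn0.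
symmetry; under eq_bigr => k _ do rewrite bump0 hS subSS exprS mulrDr mulrDl.
symmetry; rewrite big_split /= addrA mulrBl; congr (_ + _); last first.
  rewrite mulr_sumr -sumrN; apply: eq_bigr => k _; ring.
rewrite mulr_sumr big_ord_recl /= e0 expr0 !mul1r subn0 -exprS; congr (_ + _).
rewrite [RHS]big_ord_recr /= ej mulr0 mul0r addr0.
apply: eq_bigr => k _; rewrite bump0.
have hk : (j - k.+1).+1 = (j - k)%N by have := ltn_ord k; lia.
by rewrite -hk !exprS; ring.
Qed.

Lemma PE j (t : P) : (j <= n)%N ->
  \prod_(b < n | (n - j <= b)%N) (t - xx b) = \sum_(k < j.+1) (-1) ^+ k * E j k * t ^+ (j - k).
Proof.
elim: j => [_|j IH hj].
  rewrite big_pred0 => [|b]; last by rewrite subn0 leqNgt ltn_ord.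
  by rewrite big_ord1 expr0 E0 !mul1r.
have hb : (n - j.+1 < n)%N by lia.
pose b0 : 'I_n := Ordinal hb.
rewrite (bigD1 b0) /=; last exact: leqnn.
rewrite (eq_bigl (fun b : 'I_n => n - j <= b)%N); last first.
  move=> b /=; have -> : (b != b0) = (nat_of_ord b != (n - j.+1)%N) by [].
  apply/andP/idP => [[h1 h2]|h]; first by move/eqP: h2; lia.
  split; lia.
rewrite IH ?(ltnW hj) //; apply: (@PE_step j t (xx b0) (E j) (E j.+1)); [exact: E0 | | exact: E0 | exact: E_big].
by move=> k; rewrite ES -xnE.
Qed.

Lemma K_lem i (hi : (i < n)%N) :
  cg (mo (stair i) * \prod_(b < n | (i < b)%N) (xx (Ordinal hi) - xx b))
     ((n - i)%:R * mo (stair i.+1)).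
Proof.
set o := Ordinal hi; set j := (n - i.+1)%N.
have -> : \prod_(b < n | (i < b)%N) (xx o - xx b) = \prod_(b < n | (n - j <= b)%N) (xx o - xx b).
  by apply: eq_bigl => b; rewrite /j; apply/idP/idP; lia.
rewrite PE ?leq_subr // mulr_sumr.
apply: (@cg_trans _ _ _ (\sum_(k < j.+1) mo (stair i) * (H i.+1 k * xx o ^+ (j - k)))).
  apply: cg_sum => k _; apply: cgM; first exact: cg_refl.
  apply: cgM; last exact: cg_refl.
  by apply: cg_sym; exact: (cg_HE k hi).
apply: (@cg_trans _ _ _ (\sum_(k < j.+1) mo (stair i) * (xx o ^+ k * xx o ^+ (j - k)))).
  apply: cg_sum => k _; rewrite !mulrA; apply: cgM; last exact: cg_refl.
  rewrite /cg H_sum big_ord_recr /= subnn H0 mulr1 -xnE mulrDr addrK mulr_sumr.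
  apply: inS_sum => b _; rewrite mulrA.
  apply: (span_inS (span_H _ (ltnW hi))) => u [hu du].
  rewrite mulrC mulrA moM mulrC; apply: inSM; apply: (C_lem (ltnW hi)).
    apply/forallP => l; apply/implyP => hl; rewrite ffunE.
    move/forallP: hu => /(_ l); rewrite hl => /eqP ->.
    by move/forallP: (supp_stair i) => /(_ l); rewrite hl => /eqP ->.
  rewrite mdeg_addm mdeg_stair ?(ltnW hi) // du addnC -{1}(addn0 (D i)) ltn_add2l subn_gt0; exact: ltn_ord.
rewrite (eq_bigr (fun _ => mo (stair i) * xx o ^+ j)); last by move=> k _; rewrite -exprD subnKC // -ltnS ltn_ord.
rewrite sumr_const card_ord (stairS (erefl : nat_of_ord o = i)) -moM -xx_exp mulr_natl -/j.
have -> : (j.+1 = n - i)%N by rewrite /j; lia.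
exact: cg_refl.
Qed.


Definition V i : P := \prod_(a < n | (i <= a)%N) \prod_(b < n | (a < b)%N) (xx a - xx b).
Definition cc i := (\prod_(l < i) (n - l))%N.

Lemma DeltaE : (@Delta R n : P) = \prod_(a < n) \prod_(b < n | (a < b)%N) (xx a - xx b).
Proof. by []. Qed.

Lemma A_lem i : (i <= n)%N -> cg (@Delta R n) ((cc i)%:R * (mo (stair i) * V i)).
Proof.
elim: i => [_|i IH hi].
  rewrite /cc big_ord0 stair0 mo0 !mul1r DeltaE /V.
  rewrite (eq_bigl (fun _ => true)) //; exact: cg_refl.
apply: cg_trans (IH (ltnW hi)) _.
pose o : 'I_n := Ordinal hi.
have eV : V i = \prod_(b < n | (i < b)%N) (xx o - xx b) * V i.+1.
  rewrite /V (bigD1 o) /=; last exact: leqnn.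
  congr (_ * _); apply: eq_bigl => a.
  have -> : (a != o) = (nat_of_ord a != i) by [].
  by apply/andP/idP => [[h1 h2]|h]; [lia | split; lia].
rewrite eV mulrA.
have -> : cc i.+1 = (cc i * (n - i))%N by rewrite /cc big_ord_recr.
rewrite natrM -!mulrA; apply: cgM; first exact: cg_refl.
rewrite !mulrA; apply: cgM; last exact: cg_refl.
exact: K_lem.
Qed.

Lemma fact_prod' m : (\prod_(l < m) (m - l))%N = m`!.
Proof.
elim: m => [|m IH]; first by rewrite big_ord0.
by rewrite big_ord_recl subn0 factS; congr (_ * _)%N; rewrite -IH; apply: eq_bigr.
Qed.

Lemma coef_natM k (f : P) m : ((k%:R : P) * f) m = k%:R * f m.
Proof.
rewrite mulr_natl; elim: k => [|k IH]; first by rewrite mulr0n mul0r.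
by rewrite mulrS coefD IH mulrS mulrDl mul1r.
Qed.

Lemma part_a : congr_S (@Delta R n) (@staircase R n).
Proof.
have := A_lem (leqnn n).
have -> : V n = 1 by rewrite /V big_pred0 // => a; rewrite leqNgt ltn_ord.
rewrite mulr1 /cc fact_prod' stairn.
suff -> : ((n`!)%:R * mo [ffun j : 'I_n => (n.-1 - j)%N] : P) = @staircase R n by [].
by apply: funext => m; rewrite coef_natM.
Qed.

End Main.

Section Subst.
Variables (R : comPzRingType) (k n : nat).
Local Notation Pn := (ps R n).

Lemma mpowE (f : Pn) a : mpow f a = f ^+ a.
Proof. by elim: a => [|a IH] //; rewrite exprS -IH. Qed.

Lemma ordge_prodM (I : Type) (r : seq I) (Q : pred I) (F : I -> Pn) (c : I -> nat) :
  (forall i, Q i -> ordge (c i) (F i)) ->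
  ordge (\sum_(i <- r | Q i) c i) (\prod_(i <- r | Q i) F i).
Proof.
move=> h; elim/big_rec2: _ => [m|i x f qi hf]; first by rewrite ltn0.
exact: ordgeM (h i qi) hf.
Qed.

Lemma mdeg1 (v : mono k) : mdeg v = 1%N -> exists l, v = unitm l.
Proof.
move=> hv; case: (pickP (fun l => 0 < v l)%N) => [l hl|h0]; last first.
  by move: hv; rewrite /mdeg big1 // => i _; move: (h0 i) => /= /negbT; rewrite -eqn0Ngt => /eqP.
exists l.
have e := hv; rewrite /mdeg (bigD1 l) //= in e.
have vl : v l = 1%N by move: hl e => /=; lia.
have rest : (\sum_(i < k | i != l) v i)%N = 0%N by move: e; rewrite vl => /eqP; rewrite eqSS => /eqP.
apply/ffunP => i; rewrite ffunE; case: (i =P l) => [->|ne] //.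
move: rest => /eqP; rewrite sum_nat_eq0 => /forallP /(_ i) /implyP h.
by apply/eqP/h/eqP.
Qed.

Lemma unitm_inj : injective (@unitm k).
Proof.
move=> l1 l2 /ffunP /(_ l1); rewrite !ffunE eqxx.
by case: (l1 =P l2).
Qed.

Lemma msubst_coef0 (F : mps R k) (u : 'I_k -> Pn) (m : mono n) :
  mdeg m = 0%N -> msubst F u m = F (zm k).
Proof.
move=> hm; rewrite /msubst.
have bz : bnd (mdeg m) (zm k) by apply/forallP => i; rewrite ffunE.
rewrite (big_pred1 (tob (mdeg m) (zm k))) => [|a]; last first.
  apply/esym/eqP; apply: fn_inj; rewrite fn_tob //; apply/ffunP => i.
  by move: (fn_bnd a) => /forallP /(_ i); move: (fn a i) => x; rewrite hm ffunE leqn0 => /eqP.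
change (ffun_nat (tob (mdeg m) (zm k))) with (fn (tob (mdeg m) (zm k))); rewrite fn_tob //.
have -> : \prod_(i < k) (mpow (u i) (tob (mdeg m) (zm k) i) : Pn) = (1 : Pn).
  rewrite big1 // => i _; rewrite -fnE fn_tob // ffunE; by [].
have -> : (1 : Pn) m = 1 by rewrite -(mo0 R n) coef_mo -mdeg_eq0 hm eqxx.
by rewrite mulr1.
Qed.

Lemma msubst_coef1 (F : mps R k) (u : 'I_k -> Pn) (m : mono n) :
  (forall i, ordge 1 (u i)) -> mdeg m = 1%N ->
  msubst F u m = \sum_(l < k) F (unitm l) * u l m.
Proof.
move=> hu hm; rewrite /msubst.
transitivity (\sum_(a : box k (mdeg m)) \sum_(l < k)
                 (if fn a == unitm l then F (unitm l) * u l m else 0)).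
  apply: eq_bigr => a _.
  have pE : \prod_(i < k) (mpow (u i) (a i) : Pn)
            = \prod_(i < k) (u i ^+ fn a i : Pn).
    by apply: eq_bigr => i _; rewrite mpowE fnE.
  rewrite pE; change (ffun_nat a) with (fn a).
  move: (fn a) => v.
  case: (ltngtP (mdeg v) 1) => h.
  - have z : v = zm k by apply/eqP; rewrite -mdeg_eq0; move: h; rewrite ltnS leqn0.
    rewrite z big1 => [|i _]; last by rewrite ffunE.
    rewrite big1 => [|l _]; last first.
      by case: eqP => // e; move: (mdeg_unitm l); rewrite -e mdeg_zm.
    have -> : (1 : Pn) m = 0 by rewrite -(mo0 R n) coef_mo -mdeg_eq0 hm.
    by rewrite mulr0.
  - have -> : (\prod_(i < k) u i ^+ v i) m = 0.
      apply: (@ordge_prodM _ _ _ _ (fun i => v i)) => [i _|]; last by rewrite hm.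
      apply: (@ordge_le _ _ (1 * v i)%N); first by rewrite mul1n.
      elim: (v i) => [|t IH]; first by move=> p; rewrite ltn0.
      by rewrite exprS mulnS; apply: ordgeM.
    rewrite mulr0 big1 // => l _; case: eqP => // e; move: h.
    by rewrite e (mdeg_unitm l) ltnn.
  - have [l0 e0] := mdeg1 h.
    have hp : \prod_(i < k) (u i ^+ v i : Pn) = u l0.
      rewrite e0 (bigD1 l0) //= big1 => [|i ne]; last by rewrite ffunE (negbTE ne) expr0.
      by rewrite ffunE eqxx expr1 mulr1.
    rewrite hp e0 (bigD1 l0) //= eqxx big1 ?addr0 // => l ne.
    by case: (unitm l0 =P unitm l) => // e'; move: ne; rewrite (unitm_inj e') eqxx.
rewrite exchange_big; apply: eq_bigr => l _; rewrite -big_mkcond /= sum_fn_eq.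
suff -> : bnd (mdeg m) (unitm l) by [].
by apply/forallP => i; rewrite hm ffunE; case: eqP.
Qed.

End Subst.

Section CountGt.
Local Open Scope nat_scope.
Lemma count_gt N a : (\sum_(b < N | (a < b)%N) 1)%N = (N - a.+1)%N.
Proof.
have e : forall N, (\sum_(b < N) (if (a < b)%N then 1 else 0))%N = (N - a.+1)%N.
  elim => [|M IH]; first by rewrite big_ord0.
  rewrite big_ord_recr /= IH; case: (ltnP a M) => h; lia.
by rewrite big_mkcond e.
Qed.
End CountGt.

Section PartB.
Variables (R : comPzRingType) (n : nat) (F : mps R 2) (chi : mps R 1).
Local Notation P := (ps R n).
Local Notation inS := (@in_S R n).
Local Notation xx := (@xx R n).
Local Notation mo := (@mo R n).

Definition i1 : 'I_2 := lift ord0 ord0.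

Lemma coef_mX k (i : 'I_k) m : (@mX R k i) m = if m == unitm i then 1 else 0.
Proof. by []. Qed.

Lemma mX_ne_zm k (i : 'I_k) : (zm k == unitm i) = false.
Proof. by apply/negbTE/eqP => e; move: (mdeg_unitm i); rewrite -e mdeg_zm. Qed.

Lemma ordge_mX k (i : 'I_k) : ordge 1 (@mX R k i : ps R k).
Proof. by have := @ordge_mo R k (unitm i); rewrite mdeg_unitm. Qed.

Lemma fgl_facts : is_fgl F -> formal_inverse F chi ->
  [/\ F (zm 2) = 0, F (unitm ord0) = 1, F (unitm i1) = 1 & chi (unitm ord0) = -1].
Proof.
case=> h1 h2 _ _ [hc h3].
have o1 : forall i : 'I_2, ordge 1 (pair2 (@mX R 1 ord0) (@mzero R 1) i : ps R 1).
  move=> i; rewrite /pair2; case: ifP => _; last exact: ordge0.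
  exact: ordge_mX.
have o2 : forall i : 'I_2, ordge 1 (pair2 (@mzero R 1) (@mX R 1 ord0) i : ps R 1).
  move=> i; rewrite /pair2; case: ifP => _; first exact: ordge0.
  exact: ordge_mX.
have oc : ordge 1 (chi : ps R 1).
  by move=> m; rewrite ltnS leqn0 mdeg_eq0 => /eqP ->.
have o3 : forall i : 'I_2, ordge 1 (pair2 (@mX R 1 ord0) chi i : ps R 1).
  move=> i; rewrite /pair2; case: ifP => _; last exact: oc.
  exact: ordge_mX.
have d1 : mdeg (unitm (ord0 : 'I_1)) = 1%N := mdeg_unitm _.
have f0 : F (zm 2) = 0.
  have := congr1 (fun f => f (zm 1)) h1; rewrite /= msubst_coef0 ?mdeg_zm //.
  by rewrite coef_mX mX_ne_zm.
have fa : F (unitm ord0) = 1.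
  have := congr1 (fun f => f (unitm ord0)) h1; rewrite /= msubst_coef1 //.
  by rewrite !big_ord_recl big_ord0 /pair2 /= coef_mX eqxx mulr1 /mzero mulr0 !addr0.
have fb : F (unitm i1) = 1.
  have := congr1 (fun f => f (unitm ord0)) h2; rewrite /= msubst_coef1 //.
  by rewrite !big_ord_recl big_ord0 /pair2 /= coef_mX eqxx mulr1 /mzero mulr0 add0r addr0.
split => //.
have := congr1 (fun f => f (unitm ord0)) h3; rewrite /= msubst_coef1 //.
rewrite !big_ord_recl big_ord0 /pair2 /= coef_mX eqxx mulr1 fa -/i1 fb mul1r addr0 /mzero.
by move=> e; rewrite -[chi _](addKr 1) e addr0.
Qed.

Lemma G_close (hF : is_fgl F) (hchi : formal_inverse F chi) (i j : 'I_n) :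
  ordge 2 ((fsub F chi (@mX R n i) (@mX R n j) : P) - (xx i - xx j)).
Proof.
have [f0 fa fb cm] := fgl_facts hF hchi.
have [hc _] := hchi.
set c := msubst chi (fun _ : 'I_1 => @mX R n j).
have oX : forall l : 'I_n, ordge 1 (@mX R n l : P).
  by move=> l; exact: ordge_mX.
have c0 : forall m : mono n, mdeg m = 0%N -> c m = 0.
  by move=> m hm; rewrite /c msubst_coef0.
have c1 : forall m : mono n, mdeg m = 1%N -> c m = - (if m == unitm j then 1 else 0).
  move=> m hm; rewrite /c msubst_coef1 // big_ord1 cm coef_mX.
  by case: ifP; rewrite ?mulr1 ?mulr0 ?oppr0 // mulN1r.
have oc : ordge 1 (c : P).
  by move=> m; rewrite ltnS leqn0 => /eqP; apply: c0.
have o3 : forall l : 'I_2, ordge 1 (pair2 (@mX R n i) c l : P).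
  by move=> l; rewrite /pair2; case: ifP => _.
move=> m hm; rewrite coefB /fsub -/c.
case: (posnP (mdeg m)) => hm0.
  rewrite msubst_coef0 // f0 coefB !xxE !coef_mo.
  have /eqP -> : m == zm n by rewrite -mdeg_eq0 hm0.
  by rewrite !mX_ne_zm !subr0.
have hm1 : mdeg m = 1%N by move: hm hm0; lia.
rewrite msubst_coef1 // !big_ord_recl big_ord0 /pair2 /= fa -/i1 fb !mul1r c1 // addr0.
by rewrite coefB !xxE !coef_mo coef_mX subrr.
Qed.

Lemma L_lem k : forall mu, (mdeg mu + k = (D n n).+1)%N -> forall f : P, ordge k f -> inS (mo mu * f).
Proof.
elim: k => [|k IH] mu hmu f hf.
  apply: inSMr; apply: (@C_lem R n n (leqnn n)); first exact: supp_n.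
  by rewrite -hmu addn0.
have [g [hg ->]] := ordge_decomp hf.
rewrite mulr_sumr; apply: inS_sum => i _; rewrite mulrA xxE moM; apply: IH => //.
by rewrite mdeg_addm mdeg_unitm -hmu; lia.
Qed.

Lemma part_b (hF : is_fgl F) (hchi : formal_inverse F chi) :
  congr_S (@Delta R n) (@DeltaF R n F chi).
Proof.
have hin : forall a : 'I_n,
  ordge (\sum_(b < n | (a < b)%N) 1)%N (\prod_(b < n | (a < b)%N) (xx a - xx b)) /\
  ordge (\sum_(b < n | (a < b)%N) 1)%N.+1
    (\prod_(b < n | (a < b)%N) (fsub F chi (@mX R n a) (@mX R n b) : P)
     - \prod_(b < n | (a < b)%N) (xx a - xx b)).
  move=> a; apply: ordge_prod => b _; split.
    exact: ordgeB (ordge_mX a) (ordge_mX b).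
  exact: G_close.
have [_ h] := @ordge_prod R n 'I_n (index_enum _) predT
     (fun a => \prod_(b < n | (a < b)%N) (fsub F chi (@mX R n a) (@mX R n b) : P))
     (fun a => \prod_(b < n | (a < b)%N) (xx a - xx b))
     (fun a => \sum_(b < n | (a < b)%N) 1)%N (fun a _ => hin a).
have e : (\sum_(i < n | predT i) \sum_(b < n | (i < b)%N) 1)%N = D n n.
  by rewrite /D; apply: eq_big => // i _; exact: count_gt.
rewrite e in h.
apply: (_ : inS ((@Delta R n : P) - (@DeltaF R n F chi : P))).
rewrite -opprB; apply: inSN.
have hz : (mdeg (zm n) + (D n n).+1 = (D n n).+1)%N by rewrite mdeg_zm.
have := L_lem hz h.
by rewrite mo0 mul1r.
Qed.

End PartB.

Theorem mainTheorem9 (R : comPzRingType) (n : nat) (F : mps R 2) (chi : mps R 1) :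
  is_fgl F -> formal_inverse F chi ->
  congr_S (@Delta R n) (@staircase R n) /\ congr_S (@Delta R n) (@DeltaF R n F chi).
Proof.
move=> hF hchi; split; first exact: part_a.
exact: part_b.
Qed.
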